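(* Every independent set of size $14$ in $C_{5,14}^{\boxtimes 3}$ is Lee equivalent to $\{t\cdot(1,3,9): t\in\mathbb Z_{14}\}\subseteq\mathbb Z_{14}^3$ (arithmetic modulo $14$); in particular, up to Lee equivalence there is a unique independent set of size $14$ in $C_{5,14}^{\boxtimes 3}$.
   Context: For positive integers $q,d$ with $q\ge 2d$, the circular graph $C_{d,q}$ has vertex set $\mathbb Z_q$, two distinct vertices $x,y$ being adjacent iff $\min\{|x-y|,q-|x-y|\}<d$ (viewing $x,y$ as integers in $\{0,\dots,q-1\}$). For a graph $G=(V,E)$, $G^{\boxtimes n}$ has vertex set $V^n$, distinct $(u_i)$, $(v_i)$ adjacent iff for every $i$ either $u_i=v_i$ or $u_iv_i\in E$. An independent set is a set of pairwise non-adjacent vertices. Let $D_q$ be the dihedral group of order $2q$ acting on $\mathbb Z_q$ by $x\mapsto\pm x+c$ ($c\in\mathbb Z_q$); $D_q^n\rtimes S_n$ acts on $\mathbb Z_q^n$ by acting with $D_q$ in each coordinate separately and permuting coordinates. Sets $C,D\subseteq\mathbb Z_q^n$ are Lee equivalent if $g\cdot C=D$ for some $g\in D_q^n\rtimes S_n$. *)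

(* Defs.v *)
From mathcomp Require Import all_boot all_order all_algebra all_fingroup.
Unset Printing Implicit Defensive.
Import GRing.Theory.
Local Open Scope ring_scope.

(* Z_q is represented by 'Z_q; this is faithful only for q >= 2
   (all uses below have q = 14). Elements are viewed as integers
   in {0,...,q-1} via val. *)

Definition circ_dist (q : nat) (x y : 'Z_q) : nat :=
  let a := if (val x <= val y)%N then (val y - val x)%N else (val x - val y)%N in
  minn a (q - a)%nat.

Definition circ_adj (d q : nat) (x y : 'Z_q) : bool :=
  (x != y) && (circ_dist q x y < d)%nat.

Definition strong_adj (d q n : nat) (u v : {ffun 'I_n -> 'Z_q}) : bool :=
  (u != v) && [forall i, (u i == v i) || circ_adj d q (u i) (v i)].

Definition independent (d q n : nat) (S : {set {ffun 'I_n -> 'Z_q}}) : Prop :=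
  forall u v, u \in S -> v \in S -> ~~ strong_adj d q n u v.

(* The action of an element of D_q^n |x S_n : coordinate i of the image is
   (+/-) x_(s i) + c_i ; as (eps, c, s) range over all choices this gives
   exactly the maps induced by the group D_q^n |x S_n. *)
Definition lee_map (q n : nat) (eps : {ffun 'I_n -> bool}) (c : {ffun 'I_n -> 'Z_q})
  (s : 'S_n) (x : {ffun 'I_n -> 'Z_q}) : {ffun 'I_n -> 'Z_q} :=
  [ffun i => (if eps i then - x (s i) else x (s i)) + c i].

Definition lee_equiv (q n : nat) (C D : {set {ffun 'I_n -> 'Z_q}}) : Prop :=
  exists (eps : {ffun 'I_n -> bool}) (c : {ffun 'I_n -> 'Z_q}) (s : 'S_n),
    [set lee_map q n eps c s x | x in C] = D.

Definition code14 : {set {ffun 'I_3 -> 'Z_14}} :=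
  [set [ffun i : 'I_3 => (nth 0%N [:: 1; 3; 9]%N i)%:R * t] | t : 'Z_14].

(* Main.v *)
Require Import Defs.
From mathcomp Require Import all_boot all_order all_algebra all_fingroup zify.
Set Implicit Arguments. Unset Strict Implicit. Unset Printing Implicit Defensive.
Import GRing.Theory.

Definition cd (a b : nat) : nat :=
  let d := if (a <= b)%N then (b - a)%N else (a - b)%N in minn d (14 - d).
Definition farn a b := (5 <= cd a b)%N.
Definition gen (p : seq (nat*nat)) : seq (nat*nat) :=
  let f := map fst p in let g := map snd p in let t := size p in
  let cl := [seq nth (0,0) p j | j <- iota 0 t & cd t j < 5] in
  flatten [seq (let r := [seq y.2 | y <- cl & ~~ farn a y.1] in
                [seq (a,b) | b <- iota 0 14 & (b \notin g) && all (farn b) r && ((t != 1) || ((a <= b) && (5 <= b <= 7)))])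
          | a <- iota 0 14 & a \notin f].
Fixpoint ext n p := match n with 0 => [:: p] | n'.+1 => flatten [seq ext n' (rcons p x) | x <- gen p] end.
Arguments ext : simpl never.
Arguments gen : simpl never.

Lemma ext_complete n p q : size q = n ->
  (forall k, k < n -> nth (0,0) q k \in gen (p ++ take k q)) -> p ++ q \in ext n p.
Proof.
elim: n p q => [|n IH] p [|x q] //= Hs H.
  by rewrite cats0 mem_seq1.
apply/flattenP; exists (ext n (rcons p x)).
  by apply: map_f; have := H 0%N isT; rewrite take0 cats0.
rewrite -cat_rcons; apply: IH; first by case: Hs.
move=> k Hk; have := H k.+1 Hk; by rewrite /= cat_rcons.
Qed.

Lemma gen_mem p a b : a < 14 -> b < 14 -> a \notin map fst p -> b \notin map snd p ->
 (forall j, j < size p -> cd (size p) j < 5 -> farn a (nth (0,0) p j).1 || farn b (nth (0,0) p j).2) ->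
 ((size p != 1) || ((a <= b) && (5 <= b <= 7))) -> (a,b) \in gen p.
Proof.
move=> ha hb hA hB hF hR; rewrite /gen; apply/flattenP.
eexists; first apply: (map_f _ (x := a)).
  by rewrite (@mem_filter nat) hA mem_iota ha.
apply: (map_f _ (x := b)).
rewrite (@mem_filter nat) mem_iota hb hB hR !andbT /=.
apply/allP => y /mapP [z]; rewrite (@mem_filter _) => /andP [nf] /mapP [j].
rewrite (@mem_filter nat) mem_iota /= => /andP [hc hj] Ez Ey; subst.
by have := hF j hj hc; rewrite (negbTE nf).
Qed.

Definition Vn (r : seq (nat*nat)) : Prop :=
  [/\ size r = 14, nth (0,0) r 0 = (0,0),
      forall t, t < 14 -> (nth (0,0) r t).1 < 14 /\ (nth (0,0) r t).2 < 14 &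
      forall t j, t < 14 -> j < 14 -> t != j ->
        [/\ (nth (0,0) r t).1 != (nth (0,0) r j).1, (nth (0,0) r t).2 != (nth (0,0) r j).2 &
            (5 <= cd t j) || farn (nth (0,0) r t).1 (nth (0,0) r j).1 || farn (nth (0,0) r t).2 (nth (0,0) r j).2]].

Definition Rn (r : seq (nat*nat)) : bool :=
  let x := nth (0,0) r 1 in (x.1 <= x.2) && (5 <= x.2 <= 7).

Lemma V_ext r : Vn r -> Rn r -> r \in ext 13 [:: (0,0)].
Proof.
move=> [Hs H0 Hb Hp] HR.
set E := ext 13 _.
case: r Hs H0 Hb Hp HR => [|x0 r'] Hs; first discriminate Hs.
move=> /= H0 Hb Hp HR; subst x0.
have Hs' : size r' = 13 by case: Hs.
have := ext_complete (n:=13) (p:=[::(0,0)]) (q:=r') Hs'; rewrite /E; apply => k Hk.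
set r := (0,0) :: r'.
have -> : nth (0,0) r' k = nth (0,0) r k.+1 by [].
have -> : [:: (0,0)] ++ take k r' = take k.+1 r by [].
have Ht : k.+1 < 14 by [].
have Hsz : size (take k.+1 r) = k.+1 by rewrite size_takel // /= Hs'; lia.
have Hn : forall j, j < k.+1 -> nth (0,0) (take k.+1 r) j = nth (0,0) r j.
  by move=> j hj; rewrite nth_take.
have Hmem : forall y, y \in take k.+1 r -> exists2 j, j < k.+1 & y = nth (0,0) r j.
  move=> y hy; exists (index y (take k.+1 r)); first by rewrite -[X in _ < X]Hsz index_mem.
  by rewrite -Hn ?nth_index // -[X in _ < X]Hsz index_mem.
have [ha hb] := Hb _ Ht.
case Ek: (nth (0,0) r k.+1) ha hb => [a b] /= ha hb.
apply: gen_mem => //.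
- apply/mapP => [[y /Hmem [j hj ->]]] /=.
  have [h1 _ _] := Hp k.+1 j Ht (ltn_trans hj Ht) (negbT (gtn_eqF hj)).
  by rewrite Ek /= in h1; move/eqP: h1.
- apply/mapP => [[y /Hmem [j hj ->]]] /=.
  have [_ h2 _] := Hp k.+1 j Ht (ltn_trans hj Ht) (negbT (gtn_eqF hj)).
  by rewrite Ek /= in h2; move/eqP: h2.
- rewrite Hsz => j hj hc; rewrite Hn //.
  have [_ _ h3] := Hp k.+1 j Ht (ltn_trans hj Ht) (negbT (gtn_eqF hj)).
  by rewrite Ek /= leqNgt hc /= in h3.
- rewrite Hsz; case: k Hk Ht Hsz Hn Hmem Ek => [|k] //= _ _ _ _ _ Ek.
  by move: HR; rewrite /Rn /= Ek.
Qed.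

Definition genL (a b : nat) : seq (nat*nat) := [seq ((k*a) %% 14, (k*b) %% 14) | k <- iota 0 14].
Definition list8 : seq (nat*nat) := [:: (3,5); (3,9); (5,3); (5,11); (9,3); (9,11); (11,5); (11,9)].

Lemma ext_eq : ext 13 [:: (0,0)] = [:: genL 3 5].
Proof. vm_compute. reflexivity. Qed.

Definition negc (b : bool) (a : nat) := if b then (14 - a) %% 14 else a.
Definition sgm (n1 n2 sw : bool) (x : nat*nat) :=
  let y := (negc n1 x.1, negc n2 x.2) in if sw then (y.2,y.1) else y.
Definition tau (n1 n2 sw : bool) (y : nat*nat) :=
  let y' := if sw then (y.2,y.1) else y in (negc n1 y'.1, negc n2 y'.2).

Lemma iota14 (P : nat -> bool) : all P (iota 0 14) -> forall a, a < 14 -> P a.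
Proof. by move=> H a ha; apply: (allP H); rewrite mem_iota. Qed.

Lemma negc_chk : all (fun a => all (fun a' =>
   all (fun b => [&& negc b a < 14, (negc b a == negc b a') == (a == a'),
                  farn (negc b a) (negc b a') == farn a a' & negc b (negc b a) == a])
   [:: true; false]) (iota 0 14)) (iota 0 14).
Proof. by vm_compute. Qed.

Lemma negcP b a a' : a < 14 -> a' < 14 ->
  [/\ negc b a < 14, (negc b a == negc b a') = (a == a'),
      farn (negc b a) (negc b a') = farn a a' & negc b (negc b a) = a].
Proof.
move=> ha ha'; have := iota14 negc_chk ha; move/(iota14)/(_ a' ha')/allP/(_ b).
by case: b => /(_ isT) /and4P [h1 /eqP h2 /eqP h3 /eqP h4].
Qed.

Lemma negc0 b : negc b 0 = 0.
Proof. by case: b. Qed.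

Lemma farn_sym a b : farn a b = farn b a.
Proof. rewrite /farn /cd; case: (ltngtP a b) => //= h; try lia. Qed.

Lemma Vn_sig n1 n2 sw r : Vn r -> Vn (map (sgm n1 n2 sw) r).
Proof.
case=> Hs H0 Hb Hp.
have Hn : forall t, t < 14 -> nth (0,0) (map (sgm n1 n2 sw) r) t = sgm n1 n2 sw (nth (0,0) r t).
  by move=> t ht; rewrite (nth_map (0,0)) // Hs.
split.
- by rewrite size_map.
- by rewrite Hn // H0 /sgm /= !negc0; clear Hn; case: sw.
- move=> t ht; rewrite Hn //; have [h1 h2] := Hb t ht.
  have [n1l _ _ _] := negcP n1 h1 h1; have [n2l _ _ _] := negcP n2 h2 h2.
  by rewrite /sgm /=; clear Hn; case: sw.
- move=> t j ht hj htj; rewrite !Hn //.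
  have [a1 a2] := Hb t ht; have [b1 b2] := Hb j hj.
  have [_ e1 f1 _] := negcP n1 a1 b1; have [_ e2 f2 _] := negcP n2 a2 b2.
  have [h1 h2 h3] := Hp t j ht hj htj.
  rewrite /sgm /=; clear Hn; case: sw => /=; rewrite e1 e2 f1 f2; split => //.
  by rewrite -orbA (orbC (farn _ _)) orbA.
Qed.

Definition sel (x : nat*nat) : bool * bool * bool :=
  (7 < x.1, 7 < x.2, negc (7 < x.2) x.2 < negc (7 < x.1) x.1).

Lemma sel_chk : all (fun a => all (fun b => ~~ (farn a 0 || farn b 0) ||
   (let: (n1,n2,sw) := sel (a,b) in let y := sgm n1 n2 sw (a,b) in (y.1 <= y.2) && (5 <= y.2 <= 7)))
   (iota 0 14)) (iota 0 14).
Proof. by vm_compute. Qed.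

Lemma tau_chk : all (fun n1 => all (fun n2 => all (fun sw =>
   map (tau n1 n2 sw) (genL 3 5) \in [seq genL ab.1 ab.2 | ab <- list8])
   [:: true; false]) [:: true; false]) [:: true; false].
Proof. by vm_compute. Qed.

Lemma Vn_lin r : Vn r -> exists2 ab, ab \in list8 & r = genL ab.1 ab.2.
Proof.
move=> HV; have HV' := HV; case: HV' => Hs H0 Hb Hp.
case Esel: (sel (nth (0,0) r 1)) => [[n1 n2] sw].
have HV2 := Vn_sig n1 n2 sw HV.
have HR : Rn (map (sgm n1 n2 sw) r).
  rewrite /Rn (nth_map (0,0)) ?Hs //.
  have [h1 h2] := Hb 1 isT.
  have [_ _ h3] := Hp 1 0 isT isT isT; rewrite H0 /= in h3.
  move: Esel h1 h2 h3; case: (nth (0,0) r 1) => a b /= Esel h1 h2 h3.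
  have := iota14 sel_chk h1; move/(iota14)/(_ _ h2).
  by rewrite h3 Esel.
have := V_ext HV2 HR; rewrite ext_eq mem_seq1 => /eqP E.
have Er : r = map (tau n1 n2 sw) (map (sgm n1 n2 sw) r).
  rewrite -map_comp -[LHS]map_id; apply/eq_in_map => y /(nthP (0,0)) [t ht <-].
  rewrite Hs in ht; have [h1 h2] := Hb t ht.
  case: (nth (0,0) r t) h1 h2 => a b /= h1 h2.
  have [l1 _ _ i1] := negcP n1 h1 h1; have [l2 _ _ i2] := negcP n2 h2 h2.
  by rewrite /tau /sgm; clear Esel HV2 HR E; case: sw => /=; rewrite i1 i2.
have := tau_chk; rewrite E in Er.
move/allP/(_ n1); case: n1 Er {Esel HV2 HR E} => Er /(_ isT) /allP /(_ n2);
  case: n2 Er => Er /(_ isT) /allP /(_ sw); case: sw Er => Er /(_ isT);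
  rewrite -Er => /mapP [ab hab ->]; by exists ab.
Qed.

Definition far (x y : 'Z_14) : bool := (5 <= circ_dist 14 x y)%N.
Lemma farE x y : far x y = farn (val x) (val y). Proof. by []. Qed.
Definition win (a c : 'Z_14) : bool := (val (a - c)%R < 5)%N.

Lemma Zall (P : 'Z_14 -> bool) : all (fun n => P (inZp n)) (iota 0 14) -> forall x, P x.
Proof.
move=> H x; have := allP H (val x); rewrite mem_iota /= => /(_ (ltn_ord x)).
by rewrite valZpK.
Qed.

Lemma Zall2 (P : 'Z_14 -> 'Z_14 -> bool) :
  all (fun a => all (fun b => P (inZp a) (inZp b)) (iota 0 14)) (iota 0 14) -> forall x y, P x y.
Proof.
move=> H x y; have := @Zall (fun x => all (fun b => P x (inZp b)) (iota 0 14)) H x.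
by move/(@Zall (P x)).
Qed.

Lemma Zall3 (P : 'Z_14 -> 'Z_14 -> 'Z_14 -> bool) :
  all (fun a => all (fun b => all (fun c => P (inZp a) (inZp b) (inZp c)) (iota 0 14)) (iota 0 14)) (iota 0 14) ->
  forall x y z, P x y z.
Proof.
move=> H x y z; have := @Zall (fun x => all (fun b => all (fun c => P x (inZp b) (inZp c)) (iota 0 14)) (iota 0 14)) H x.
by move/(@Zall2 (P x)).
Qed.

Lemma near_win a c c' : win a c -> win a c' -> ~~ far c c'.
Proof.
have H := @Zall3 (fun a c c' => ~~ (win a c && win a c') || ~~ far c c') ltac:(by vm_compute).
by move=> h1 h2; have := H a c c'; rewrite h1 h2.
Qed.

Lemma far_tr x y c : far (x - c)%R (y - c)%R = far x y.
Proof. have H := @Zall3 (fun x y c => far (x - c)%R (y - c)%R == far x y) ltac:(by vm_compute). by move: (H x y c) => /= /eqP. Qed.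

Lemma win_split a c : (win a c : nat) = ((c == a) + (win a c && (c != a)))%N.
Proof. have H := @Zall2 (fun a c => (win a c : nat) == ((c == a) + (win a c && (c != a)))%N) ltac:(by vm_compute). by move: (H a c) => /= /eqP. Qed.

Lemma win_split' a c : (win (a - 1)%R c : nat) = ((c == a - 5)%R + (win a c && (c != a)))%N.
Proof. have H := @Zall2 (fun a c => (win (a - 1)%R c : nat) == ((c == a - 5)%R + (win a c && (c != a)))%N) ltac:(by vm_compute). by move: (H a c) => /= /eqP. Qed.

Lemma sub15 (a : 'Z_14) : (a - 5 - 5 - 5 = a - 1)%R.
Proof. have H := @Zall (fun a => (a - 5 - 5 - 5 == a - 1)%R) ltac:(by vm_compute). by move: (H a) => /= /eqP. Qed.

Lemma sumZ (F : 'Z_14 -> nat) : \sum_(a : 'Z_14) F a = foldr addn 0 [seq F (inZp n) | n <- iota 0 14].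
Proof.
rewrite foldrE big_map.
have -> : \sum_(a : 'Z_14) F a = \sum_(i < 14) F (inZp i).
  by apply: eq_bigr => i _; rewrite valZpK.
by rewrite -(big_mkord xpredT (fun i => F (inZp i))) /index_iota subn0.
Qed.

Lemma winsum c : \sum_(a : 'Z_14) (win a c : nat) = 5.
Proof. have H := @Zall (fun c => foldr addn 0 [seq (win (inZp n) c : nat) | n <- iota 0 14] == 5) ltac:(by vm_compute). by rewrite sumZ; move: (H c) => /= /eqP. Qed.

Lemma eqsum (c : 'Z_14) : \sum_(a : 'Z_14) (c == a : nat) = 1.
Proof. have H := @Zall (fun c => foldr addn 0 [seq (c == inZp n : nat) | n <- iota 0 14] == 1) ltac:(by vm_compute). by rewrite sumZ; move: (H c) => /= /eqP. Qed.

Lemma card_sumb (A : finType) (P : pred A) : #|P| = \sum_(x : A) (P x : nat).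
Proof. rewrite -sum1_card big_mkcond /=; apply: eq_bigr => x _; rewrite unfold_in; by case: (P x). Qed.

Lemma card_slice (A : finType) (X : {set A}) (h : A -> 'Z_14) (P : pred 'Z_14) :
  #|[set x in X | P (h x)]| = \sum_(x : A) ((x \in X) * P (h x))%N.
Proof. rewrite card_sumb; apply: eq_bigr => x _; change (nat_of_bool (x \in [set x0 in X | P (h x0)]) = ((x \in X) * P (h x))%N); by rewrite inE mulnb. Qed.

Lemma dc (A : finType) (X : {set A}) (h : A -> 'Z_14) :
  \sum_(a : 'Z_14) #|[set x in X | win a (h x)]| = (5 * #|X|)%N.
Proof.
under eq_bigr => a _ do rewrite card_slice.
rewrite exchange_big /= card_sumb big_distrr /=.
apply: eq_bigr => x _; rewrite -big_distrr /= winsum; lia.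
Qed.

Lemma slice_le (A : finType) (X : {set A}) (h : A -> 'Z_14) k :
  (forall a, #|[set x in X | win a (h x)]| <= k)%N -> (5 * #|X| <= 14 * k)%N.
Proof.
move=> H; rewrite -(dc X h); apply: (@leq_trans (\sum_(a : 'Z_14) k)); first exact: leq_sum.
by rewrite sum_nat_const card_ord mulnC.
Qed.

Lemma L1 (A : finType) (X : {set A}) (h : A -> 'Z_14) :
  (forall x y, x \in X -> y \in X -> x != y -> far (h x) (h y)) -> (#|X| <= 2)%N.
Proof.
move=> H; suff : (5 * #|X| <= 14 * 1)%N by lia.
apply: (slice_le (h := h)) => a; apply/card_le1_eqP => x y.
rewrite !inE => /andP [xX wx] /andP [yX wy].
apply/eqP/negPn/negP; rewrite eq_sym => ne; have := H x y xX yX ne.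
by rewrite (negbTE (near_win wx wy)).
Qed.

Lemma L2 (A : finType) (X : {set A}) (h1 h2 : A -> 'Z_14) :
  (forall x y, x \in X -> y \in X -> x != y -> far (h1 x) (h1 y) || far (h2 x) (h2 y)) -> (#|X| <= 5)%N.
Proof.
move=> H; suff : (5 * #|X| <= 14 * 2)%N by lia.
apply: (slice_le (h := h1)) => a; apply: (L1 (h := h2)) => x y.
rewrite !inE => /andP [xX wx] /andP [yX wy] ne.
by have := H x y xX yX ne; rewrite (negbTE (near_win wx wy)).
Qed.

Lemma L3 (A : finType) (X : {set A}) (h1 h2 h3 : A -> 'Z_14) :
  (forall x y, x \in X -> y \in X -> x != y -> far (h1 x) (h1 y) || far (h2 x) (h2 y) || far (h3 x) (h3 y)) ->
  #|X| = 14 -> forall j, #|[set x in X | h1 x == j]| = 1.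
Proof.
move=> H HX.
have Hle : forall a, (#|[set x in X | win a (h1 x)]| <= 5)%N.
  move=> a; apply: (L2 (h1 := h2) (h2 := h3)) => x y.
  rewrite !inE => /andP [xX wx] /andP [yX wy] ne.
  by have := H x y xX yX ne; rewrite (negbTE (near_win wx wy)).
have Heq : forall a, #|[set x in X | win a (h1 x)]| = 5.
  have Hs := dc X h1; rewrite HX in Hs.
  have : (\sum_(a : 'Z_14) (5 - #|[set x in X | win a (h1 x)]|) == 0)%N.
    by rewrite sumnB ?Hs ?sum_nat_const ?card_ord.
  rewrite sum_nat_eq0 => /forallP Hz a; have := Hz a; have := Hle a; rewrite /=; lia.
pose n j := #|[set x in X | h1 x == j]|.
have Hn5 : forall a, n a = n (a - 5)%R.
  move=> a; have E1 := Heq a; have E2 := Heq (a - 1)%R.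
  rewrite card_slice in E1; rewrite card_slice in E2.
  have F1 : (\sum_(x : A) ((x \in X) * win a (h1 x)) = \sum_(x : A) ((x \in X) * (h1 x == a))
       + \sum_(x : A) ((x \in X) * (win a (h1 x) && (h1 x != a))))%N.
    by rewrite -big_split; apply: eq_bigr => x _; rewrite win_split mulnDr.
  have F2 : (\sum_(x : A) ((x \in X) * win (a - 1)%R (h1 x)) = \sum_(x : A) ((x \in X) * (h1 x == a - 5)%R)
       + \sum_(x : A) ((x \in X) * (win a (h1 x) && (h1 x != a))))%N.
    by rewrite -big_split; apply: eq_bigr => x _; rewrite win_split' mulnDr.
  rewrite /n !(card_slice X h1 (pred1 _)) /=; lia.
have Hn1 : forall a, n a = n (a - 1)%R by move=> a; rewrite -sub15 -!Hn5.
have Hn0 : forall k, n (k%:R)%R = n 0%R.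
  elim=> [//|k IH]; rewrite -IH Hn1 -natr1 addrK //.
have Hc : forall a, n a = n 0%R by move=> a; rewrite -(natr_Zp a) Hn0.
have Hsum : (\sum_(j : 'Z_14) n j = #|X|)%N.
  rewrite /n; under eq_bigr => j _ do rewrite (card_slice X h1 (pred1 j)).
  rewrite exchange_big card_sumb /=; apply: eq_bigr => x _.
  by rewrite -big_distrr /= eqsum muln1.
have Hs2 : (\sum_(j : 'Z_14) n j = \sum_(j : 'Z_14) n 0%R)%N by apply: eq_bigr => j _; rewrite Hc.
rewrite Hs2 sum_nat_const card_ord HX in Hsum.
move=> j; rewrite -/(n j) Hc; move: (n 0%R) Hsum => m; rewrite (_ : (Zp_trunc 14).+2 = 14) //; lia.
Qed.

Definition i0 : 'I_3 := @Ordinal 3 0 isT.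
Definition i1 : 'I_3 := @Ordinal 3 1 isT.
Definition i2 : 'I_3 := @Ordinal 3 2 isT.

Lemma I3cases (i : 'I_3) : [\/ i = i0, i = i1 | i = i2].
Proof.
case: i => [[|[|[|//]]] hi].
- by apply: Or31; apply: val_inj.
- by apply: Or32; apply: val_inj.
- by apply: Or33; apply: val_inj.
Qed.

Lemma farxx x : far x x = false.
Proof. by rewrite /far /circ_dist leqnn subnn. Qed.

Lemma nadj_of_far (u v : {ffun 'I_3 -> 'Z_14}) i : far (u i) (v i) -> ~~ strong_adj 5 14 3 u v.
Proof.
move=> hf; rewrite /strong_adj; apply/nandP; right; apply/forallPn; exists i.
have ne : u i != v i by apply/eqP => e; rewrite e farxx in hf.
by rewrite negb_or ne /circ_adj ne /= -leqNgt.
Qed.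

Lemma indep_far S u v : independent 5 14 3 S -> u \in S -> v \in S -> u != v ->
  far (u i0) (v i0) || far (u i1) (v i1) || far (u i2) (v i2).
Proof.
move=> H hu hv ne; have := H u v hu hv.
rewrite /strong_adj ne /= negb_forall => /existsP [i].
rewrite negb_or => /andP [nei]; rewrite /circ_adj nei /= -leqNgt => hf.
by case: (I3cases i) hf => -> hf; rewrite /far hf ?orbT.
Qed.

Definition F14 (t : 'Z_14) : {ffun 'I_3 -> 'Z_14} :=
  [ffun i : 'I_3 => ((nth 0%N [:: 1; 3; 9]%N i)%:R * t)%R].

Lemma code_chk : forall t t' : 'Z_14, (t == t') ||
   has (fun i : nat => far ((nth 0%N [:: 1; 3; 9]%N i)%:R * t)%R ((nth 0%N [:: 1; 3; 9]%N i)%:R * t')%R) (iota 0 3).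
Proof.
exact: (@Zall2 (fun t t' => (t == t') ||
   has (fun i : nat => far ((nth 0%N [:: 1; 3; 9]%N i)%:R * t)%R ((nth 0%N [:: 1; 3; 9]%N i)%:R * t')%R) (iota 0 3)) ltac:(by vm_compute)).
Qed.

Lemma partA : independent 5 14 3 code14 /\ #|code14| = 14%N.
Proof.
split.
- move=> u v /imsetP [t _ ->] /imsetP [t' _ ->].
  have := code_chk t t'; case/orP => [/eqP -> | ].
    by rewrite /strong_adj eqxx.
  case/hasP => i; rewrite mem_iota /= => hi.
  have -> : i = val (Ordinal hi) by [].
  move=> hf; apply: (nadj_of_far (i := Ordinal hi)); by rewrite !ffunE.
- rewrite card_imset ?card_ord //.
  move=> t t' /ffunP /(_ i0); by rewrite !ffunE /= !mul1r.
Qed.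

Lemma card1_uniq (A : finType) (X : {set A}) (f : A -> 'Z_14) j u v :
  #|[set x in X | f x == j]| = 1%N -> u \in X -> v \in X -> f u = j -> f v = j -> u = v.
Proof.
move=> h1 hu hv fu fv.
have : (#|[set x in X | f x == j]| <= 1)%N by rewrite h1.
move/card_le1_eqP => H; apply: (H v u); by rewrite inE ?hu ?hv ?fu ?fv eqxx.
Qed.

Lemma card1_ex (A : finType) (X : {set A}) (f : A -> 'Z_14) j :
  #|[set x in X | f x == j]| = 1%N -> exists x, (x \in X) && (f x == j).
Proof.
move=> h1; have : (0 < #|[set x in X | f x == j]|)%N by rewrite h1.
by case/card_gt0P => x; rewrite inE => hx; exists x.
Qed.

Definition wit (ab : nat * nat) : bool * bool * bool :=
  let sw := (ab.1 == 5) || (ab.1 == 9) in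
  let xy := if sw then (ab.2, ab.1) else ab in (xy.1 == 11, xy.2 == 5, sw).

Definition swn (sw : bool) (i : nat) : nat := if sw then (if i == 1 then 2 else if i == 2 then 1 else i) else i.

Lemma final_chk : all (fun ab => all (fun n => all (fun i =>
   let: (e1, e2, sw) := wit ab in
   let q := ((n * nth 0 [:: 1; ab.1; ab.2] (swn sw i))%N%:R : 'Z_14)%R in
   (if nth false [:: false; e1; e2] i then - q else q)%R == ((nth 0%N [:: 1; 3; 9]%N i)%:R * inZp n)%R)
   (iota 0 3)) (iota 0 14)) list8.
Proof. by vm_compute. Qed.

Lemma partB S : independent 5 14 3 S -> #|S| = 14%N -> lee_equiv 14 3 S code14.
Proof.
move=> HI HS.
have Hf : forall u v, u \in S -> v \in S -> u != v ->
    far (u i0) (v i0) || far (u i1) (v i1) || far (u i2) (v i2).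
  by move=> u v hu hv ne; apply: indep_far HI hu hv ne.
have C0 : forall j, #|[set x in S | x i0 == j]| = 1%N.
  apply: (L3 (h1 := fun x : {ffun 'I_3 -> 'Z_14} => x i0) (h2 := fun x => x i1) (h3 := fun x => x i2)) HS.
  exact: Hf.
have C1 : forall j, #|[set x in S | x i1 == j]| = 1%N.
  apply: (L3 (h1 := fun x : {ffun 'I_3 -> 'Z_14} => x i1) (h2 := fun x => x i0) (h3 := fun x => x i2)) HS.
  move=> x y hx hy ne; move: (Hf x y hx hy ne) => /=.
  by case: (far (x i0) _); case: (far (x i1) _).
have C2 : forall j, #|[set x in S | x i2 == j]| = 1%N.
  apply: (L3 (h1 := fun x : {ffun 'I_3 -> 'Z_14} => x i2) (h2 := fun x => x i0) (h3 := fun x => x i1)) HS.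
  move=> x y hx hy ne; move: (Hf x y hx hy ne) => /=.
  by case: (far (x i0) _); case: (far (x i1) _); case: (far (x i2) _).
have Hex : forall t, exists x, (x \in S) && (x i0 == t).
  by move=> t; apply: (card1_ex (f := fun x : {ffun 'I_3 -> 'Z_14} => x i0)); apply: C0.
pose P t := xchoose (Hex t).
have HP : forall t, P t \in S /\ P t i0 = t.
  by move=> t; have := xchooseP (Hex t); case/andP => h /eqP.
have HPu : forall u, u \in S -> u = P (u i0).
  move=> u hu; have [h1 h2] := HP (u i0).
  exact: (card1_uniq (f := fun x : {ffun 'I_3 -> 'Z_14} => x i0) (C0 (u i0)) hu h1 erefl h2).
have SP : S = [set P t | t : 'Z_14].
  apply/setP => u; apply/idP/imsetP => [hu | [t _ ->]]; last exact: (HP t).1.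
  by exists (u i0) => //; apply: HPu.
have Pi1 : forall t t', P t i1 = P t' i1 -> P t = P t'.
  move=> t t' e.
  exact: (card1_uniq (f := fun x : {ffun 'I_3 -> 'Z_14} => x i1) (C1 (P t i1)) (HP t).1 (HP t').1 erefl (esym e)).
have Pi2 : forall t t', P t i2 = P t' i2 -> P t = P t'.
  move=> t t' e.
  exact: (card1_uniq (f := fun x : {ffun 'I_3 -> 'Z_14} => x i2) (C2 (P t i2)) (HP t).1 (HP t').1 erefl (esym e)).
pose Q t := [ffun i => (P t i - P 0%R i)%R].
have HQ : forall t i, Q t i = (P t i - P 0%R i)%R by move=> t i; rewrite ffunE.
pose r := [seq (val (Q (inZp k) i1), val (Q (inZp k) i2)) | k <- iota 0 14].
have Hr : forall k, (k < 14)%N -> nth (0,0)%N r k = (val (Q (inZp k) i1), val (Q (inZp k) i2)).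
  by move=> k hk; rewrite (nth_map 0%N) ?size_iota // nth_iota.
have Hv : forall k, (k < 14)%N -> val (inZp k : 'Z_14) = k.
  by move=> k hk; rewrite /= modn_small.
have HV : Vn r.
  split.
  - by rewrite size_map size_iota.
  - rewrite Hr //; have -> : inZp 0 = 0%R :> 'Z_14 by apply: val_inj.
    by rewrite !HQ !subrr.
  - by move=> t ht; rewrite Hr //=.
  - move=> t j ht hj ne; rewrite !Hr //=.
    set T := (inZp t : 'Z_14); set J := (inZp j : 'Z_14).
    have TJ : T != J.
      apply: contra ne => /eqP e; by rewrite -(Hv t ht) -(Hv j hj) -/T -/J e.
    have PTJ : P T != P J.
      by apply: contra TJ => /eqP e; rewrite -(HP T).2 -(HP J).2 e.
    have := Hf _ _ (HP T).1 (HP J).1 PTJ.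
    rewrite (HP T).2 (HP J).2 -(far_tr (P T i1) (P J i1) (P 0%R i1)) -(far_tr (P T i2) (P J i2) (P 0%R i2)).
    rewrite -!HQ !farE !Hv // => hfar; split => //.
    + apply: contra PTJ => /eqP /val_inj; rewrite !HQ => /addIr e; apply/eqP; exact: Pi1.
    + apply: contra PTJ => /eqP /val_inj; rewrite !HQ => /addIr e; apply/eqP; exact: Pi2.
have [ab hab Er] := Vn_lin HV.
have HQf : forall (t : 'Z_14) (i : 'I_3), Q t i = ((val t * nth 0%N [:: 1; ab.1; ab.2]%N i)%N%:R)%R.
  move=> t i; have ht := ltn_ord t.
  have Et : nth (0,0)%N r (val t) = nth (0,0)%N (genL ab.1 ab.2) (val t) by rewrite Er.
  rewrite Hr // /genL (nth_map 0%N) ?size_iota // nth_iota // valZpK in Et.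
  case: Et => E1 E2.
  case: (I3cases i) => ->.
  + by rewrite HQ (HP t).2 (HP 0%R).2 subr0 /= muln1 natr_Zp.
  + by apply: val_inj; rewrite /= E1 val_Zp_nat.
  + by apply: val_inj; rewrite /= E2 val_Zp_nat.
case Ew: (wit ab) => [[e1 e2] sw].
pose eps := [ffun i : 'I_3 => nth false [:: false; e1; e2] i].
pose s : 'S_3 := if sw then tperm i1 i2 else 1%g.
have Hs : forall i, val (s i) = swn sw (val i).
  move=> i; rewrite /s; case: sw {Ew s eps} => /=; last by rewrite perm1.
  by case: (I3cases i) => ->; rewrite ?tpermL ?tpermR ?tpermD.
pose c := [ffun i => if eps i then P 0%R (s i) else (- P 0%R (s i))%R].
exists eps, c, s.
rewrite SP -imset_comp.
have -> : code14 = [set F14 t | t : 'Z_14] by [].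
apply: eq_imset => t /=.
apply/ffunP => i; rewrite !ffunE.
have -> : forall j, P t j = (Q t j + P 0%R j)%R by move=> j; rewrite HQ subrK.
rewrite HQf Hs.
have := allP final_chk ab hab; move/allP/(_ (val t)); rewrite mem_iota ltn_ord => /(_ isT).
move/allP/(_ (val i)); rewrite mem_iota ltn_ord => /(_ isT).
rewrite Ew valZpK => /eqP <-.
by case: (nth false _ _); rewrite ?opprD ?addrNK ?addrK.
Qed.

Theorem proposition9p6 :
  (independent 5 14 3 code14 /\ #|code14| = 14%N) /\
  (forall S : {set {ffun 'I_3 -> 'Z_14}},
     independent 5 14 3 S -> #|S| = 14%N -> lee_equiv 14 3 S code14).
Proof. split; [exact: partA | exact: partB]. Qed.
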